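(* Let $\mathbf{F}$ be a regular $1$-independent normed space of functions over a set $X$, let $\omega_1,\dots,\omega_n\in Mult(\mathbf{F})$ and $\vec\omega=(\omega_1,\dots,\omega_n):X\to\mathbb{C}^n$. Let $Y\subset\mathbb{C}^n$ be a bounded domain such that the polynomials are dense in $A(Y)$ with respect to $\sup_{\overline Y}|\cdot|$, and the closure of the open unit ball of the polynomials (sup norm on $Y$) in the topology of pointwise convergence on $Y$ equals the closed unit ball of $H_\infty(Y)$. Assume $\vec\omega(X)\subset\overline{Y}$, and that $C_{\vec\omega}:p\mapsto p\circ\vec\omega$ maps the polynomials into $Mult(\mathbf{F})$ and is bounded with respect to the norm $\sup_{\overline{Y}}|p|$. Then: (i) $C_{\vec\omega}$ maps $A(Y)$ (its elements viewed as continuous functions on $\overline Y$) boundedly into $Mult(\mathbf{F})$; (ii) if additionally $\vec\omega(X)\subset Y$, then $C_{\vec\omega}$ maps $H_\infty(Y)$ boundedly into $Mult(\mathbf{F})$.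
   Context: A normed space of functions over a set $X$ is a linear subspace of the space of all functions $X\to\mathbb{C}$ with a norm for which point evaluations are bounded; it is $1$-independent if for each $x$ some $f\in\mathbf{F}$ has $f(x)\ne0$, and regular if its closed unit ball is closed in the topology of pointwise convergence on $X$. $Mult(\mathbf{F})$ is the set of $\omega:X\to\mathbb{C}$ with $\omega f\in\mathbf{F}$ for all $f\in\mathbf{F}$ and $f\mapsto\omega f$ bounded, normed by the operator norm. $H_\infty(Y)$ is the space of bounded holomorphic functions on $Y$ with the sup norm; $A(Y)$ is its closed subspace of functions extending continuously to $\overline Y$. *)

(* Defs.v *)
(* Complex numbers are R[i] (real_closed's
   complex) for an arbitrary R : realType; we use the copy (R[i])^o which carries
   MathComp-Analysis' normed/topological structure of a numFieldType over itself. *)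
From HB Require Import structures.
From mathcomp Require Import all_boot all_order all_algebra.
From mathcomp Require Import all_classical all_reals all_analysis.
From mathcomp Require Import complex.
From mathcomp Require mpoly.
Import Order.TTheory GRing.Theory Num.Theory.
Import numFieldNormedType.Exports.

Set Implicit Arguments.
Unset Strict Implicit.
Unset Printing Implicit Defensive.

Local Open Scope classical_set_scope.
Local Open Scope ring_scope.

Notation CC R := ((R[i])^o).
Notation CCn R n := ('rV[(R[i])^o]_n).

Section Defs.
Context {R : realType}.
Local Notation C := (CC R).
Local Notation Cn n := (CCn R n).

Definition cmod (z : C) : R := ComplexField.Normc.normc (z : R[i]).

Definition supnorm {T : Type} (S : set T) (g : T -> C) : R :=
  sup [set cmod (g z) | z in S].

Definition normed_function_space {X : Type} (F : set (X -> C)) (N : (X -> C) -> R)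
  : Prop :=
  [/\ F (fun _ => 0),
      (forall f g, F f -> F g -> F (fun x => f x + g x)) &
      (forall (a : C) f, F f -> F (fun x => a * f x))] /\
  [/\ (forall f, F f -> 0 <= N f),
      (forall f, F f -> N f = 0 -> f = (fun _ => 0)),
      (forall (a : C) f, F f -> N (fun x => a * f x) = cmod a * N f),
      (forall f g, F f -> F g -> N (fun x => f x + g x) <= N f + N g) &
      (forall x : X, exists c : R, forall f, F f -> cmod (f x) <= c * N f)].

Definition one_independent {X : Type} (F : set (X -> C)) : Prop :=
  forall x : X, exists f, F f /\ f x != 0.

Definition regular_fs {X : Type} (F : set (X -> C)) (N : (X -> C) -> R) : Prop :=
  closed ([set f | F f /\ N f <= 1] : set {ptws X -> C}).

Definition is_mult {X : Type} (F : set (X -> C)) (N : (X -> C) -> R) (om : X -> C)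
  : Prop :=
  (forall f, F f -> F (fun x => om x * f x)) /\
  (exists c : R, forall f, F f -> N (fun x => om x * f x) <= c * N f).

Definition mult_norm {X : Type} (F : set (X -> C)) (N : (X -> C) -> R) (om : X -> C)
  : R := sup [set N (fun x => om x * f x) | f in [set f | F f /\ N f <= 1]].

Definition bounded_into_Mult {X A : Type} (F : set (X -> C)) (N : (X -> C) -> R)
  (D : set A) (nrm : A -> R) (T : A -> (X -> C)) : Prop :=
  (forall g, D g -> is_mult F N (T g)) /\
  (exists K : R, forall g, D g -> mult_norm F N (T g) <= K * nrm g).

Definition bounded_domain {n : nat} (Y : set (Cn n)) : Prop :=
  [/\ Y !=set0, open Y, connected Y & bounded_set Y].

(* holomorphic = complex (Frechet) differentiable at each point of Y *)
Definition holo_on {n : nat} (Y : set (Cn n)) (g : Cn n -> C) : Prop :=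
  forall z, Y z -> differentiable g z.

Definition Hinf {n : nat} (Y : set (Cn n)) (g : Cn n -> C) : Prop :=
  holo_on Y g /\ exists M : R, forall z, Y z -> cmod (g z) <= M.

Definition Aalg {n : nat} (Y : set (Cn n)) (g : Cn n -> C) : Prop :=
  Hinf Y g /\ {within closure Y, continuous g}.

Definition polyfun {n : nat} (p : mpoly.mpoly n C) (z : Cn n) : C :=
  mpoly.meval (fun i => z ord0 i) p.

Definition restr {n : nat} (Y : set (Cn n)) (g : Cn n -> C) : {ptws Y -> C} :=
  fun y => g (val y).

Definition vecfun {X : Type} {n : nat} (w : 'I_n -> X -> C) (x : X) : Cn n :=
  \row_i w i x.

End Defs.
Arguments restr {R n} Y g _.

(* Main.v *)
Require Import Defs.
From HB Require Import structures.
From mathcomp Require Import all_boot all_order all_algebra.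
From mathcomp Require Import all_classical all_reals all_analysis.
From mathcomp Require Import complex.
From mathcomp Require mpoly.
Import Order.TTheory GRing.Theory Num.Theory.
Import numFieldNormedType.Exports.
Local Open Scope classical_set_scope.
Local Open Scope ring_scope.
Section CmodLemmas.
Context {R : realType}.
Local Notation C := (CC R).

Lemma cmodE (z : C) : ((cmod z)%:C%C : C) = `|z|.
Proof. by case: z. Qed.

Lemma cmod_ge0 (z : C) : 0 <= cmod z.
Proof. by case: z => a b; rewrite /cmod /=; exact: sqrtr_ge0. Qed.

Lemma cmodM (a b : C) : cmod (a * b) = cmod a * cmod b.
Proof. by rewrite /cmod ComplexField.Normc.normcM. Qed.

Lemma cmodD (a b : C) : cmod (a + b) <= cmod a + cmod b.
Proof. exact: le_normcD. Qed.

Lemma cmodN (a : C) : cmod (- a) = cmod a.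
Proof. exact: normcN. Qed.

Lemma cmod0 : cmod (0 : C) = 0.
Proof. exact: ComplexField.Normc.normc0. Qed.

Lemma cmod_eq0 (a : C) : cmod a = 0 -> a = 0.
Proof. exact: ComplexField.Normc.eq0_normc. Qed.

Lemma cmodR (r : R) : 0 <= r -> cmod ((r%:C)%C : C) = r.
Proof. by move=> r0; rewrite /cmod /= expr0n /= addr0 sqrtr_sqr ger0_norm. Qed.

Lemma cmodB (a b : C) : cmod a <= cmod b + cmod (a - b).
Proof. by have := cmodD b (a - b); rewrite addrC subrK addrC. Qed.

Lemma posC (e : C) : 0 < e -> exists2 r : R, 0 < r & e = (r%:C)%C.
Proof.
case: e => a b => H.
have: (0 : R[i]) < (a +i* b)%C by exact: H.
rewrite -[(0 : R[i])]/((0 +i* 0)%C) -[(_ +i* _)%C < (_ +i* _)%C]/((_ == _) && (_ < _)).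
move=> /andP[/eqP -> a0]. by exists a.
Qed.

Lemma normC_lt (z : C) (r : R) : (`|z| < (r%:C)%C) = (cmod z < r).
Proof. by rewrite -cmodE ltcR. Qed.

Lemma normC_le (z : C) (r : R) : (`|z| <= (r%:C)%C) = (cmod z <= r).
Proof. by rewrite -cmodE lecR. Qed.
End CmodLemmas.

Lemma ptwsP {U : Type} {V : topologicalType} (F : set_system (U -> V)) (f : U -> V) :
  Filter F -> (F --> (f : {ptws U -> V})) <-> forall t, (fun g => g t) @ F --> f t.
Proof.
move=> FF; rewrite cvg_sup; split.
  move=> + t => /(_ t).
  rewrite cvg_image; last by rewrite eqEsubset; split=> v // _; exists (cst v).
  apply: cvg_trans => W /=; rewrite ?nbhs_simpl /fmap /= => [[W' + <-]].
  by apply: filterS => g W'g /=; exists g.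
move=> + i => /(_ i).
rewrite cvg_image; last by rewrite eqEsubset; split=> v // _; exists (cst v).
move=> + W //=; rewrite ?nbhs_simpl => Q => /Q Q'; exists (@^~ i @^-1` W) => //.
by rewrite eqEsubset; split => [j [? + <-//]|j Wj]; exists (fun _ => j).
Qed.

Section NFS.
Context {R : realType}.
Local Notation C := (CC R).
Context {X : Type}.
Context {F : set (X -> C)} {N : (X -> C) -> R}.
Hypothesis hNF : normed_function_space F N.

Lemma F0 : F (fun _ => 0).
Proof. by case: hNF => -[H _ _] _. Qed.
Lemma Fscale (a : C) f : F f -> F (fun x => a * f x).
Proof. by case: hNF => -[_ _ H] _; exact: H. Qed.
Lemma Nge0 f : F f -> 0 <= N f.
Proof. by case: hNF => _ [H _ _ _ _]; exact: H. Qed.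
Lemma Nscale (a : C) f : F f -> N (fun x => a * f x) = cmod a * N f.
Proof. by case: hNF => _ [_ _ H _ _]; exact: H. Qed.
Lemma Neq0 f : F f -> N f = 0 -> f = (fun _ => 0).
Proof. by case: hNF => _ [_ H _ _ _]; exact: H. Qed.
Lemma N0 : N (fun _ => 0) = 0.
Proof.
have H := @Nscale 0 _ F0.
have E : (fun x : X => (0 : C) * 0) = (fun _ => 0) by apply: funext => x; rewrite mulr0.
by rewrite E cmod0 mul0r in H.
Qed.

Definition ball1 := [set f | F f /\ N f <= 1].

Lemma ball1_0 : ball1 (fun _ => 0).
Proof. by split; [exact: F0| rewrite N0]. Qed.

Lemma mult_bound (om : X -> C) : is_mult F N om ->
  forall f, F f -> N (fun x => om x * f x) <= mult_norm F N om * N f.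
Proof.
move=> [Fom [c Hc]] f Ff.
have hs : has_sup [set N (fun x => om x * f x) | f in ball1].
  split; first by exists (N (fun x => om x * 0)), (fun _ => 0) => //; exact: ball1_0.
  exists `|c| => _ [g [Fg Ng] <-].
  apply: le_trans (Hc _ Fg) _.
  have h1 : c * N g <= `|c| * N g by apply: ler_wpM2r; [exact: Nge0 | exact: ler_norm].
  apply: le_trans h1 _.
  by rewrite -[leRHS]mulr1; apply: ler_wpM2l.
have [Nf0|Nfpos] := eqVneq (N f) 0.
  rewrite Nf0 mulr0; have -> := @Neq0 f Ff Nf0.
  have -> : (fun x : X => om x * 0) = (fun _ => 0) by apply: funext => x; rewrite mulr0.
  by rewrite N0.
have Nfgt0 : 0 < N f by rewrite lt0r Nfpos Nge0.
pose a : C := (((N f)^-1)%:C)%C.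
have ca : cmod a = (N f)^-1 by rewrite cmodR // invr_ge0 Nge0.
have Hb : ball1 (fun x => a * f x).
  by split; [exact: Fscale | rewrite Nscale // ca mulVf].
have := sup_upper_bound hs; move/ubP => /(_ _ (ex_intro2 _ _ _ Hb erefl)).
have -> : (fun x => om x * (a * f x)) = (fun x => a * (om x * f x)).
  by apply: funext => x; rewrite mulrCA.
rewrite Nscale ?ca; last exact: Fom.
by rewrite ler_pdivrMl // mulrC.
Qed.

Lemma mult_finish (T : X -> C) (B : R) : 0 <= B ->
  (forall f, F f -> F (fun x => T x * f x) /\ N (fun x => T x * f x) <= B * N f) ->
  is_mult F N T /\ mult_norm F N T <= B.
Proof.
move=> B0 H; split.
  by split; [move=> f /H[] | exists B => f /H[]].
apply: ge_sup.
  by exists (N (fun x => T x * 0)), (fun _ => 0) => //; exact: ball1_0.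
move=> _ [g [Fg Ng] <-]; have [_ ] := H _ Fg => /le_trans; apply.
by rewrite -[leRHS]mulr1; apply: ler_wpM2l.
Qed.

End NFS.

Lemma ptws_cont {R : realType} {A U : Type} (a : U -> A) (c : U -> CC R) :
  continuous (fun u : {ptws A -> CC R} => ((fun x => u (a x) * c x) : {ptws U -> CC R})).
Proof.
move=> u.
pose Phi := (fun u : {ptws A -> CC R} => ((fun x => u (a x) * c x) : U -> CC R)).
have : forall t, (fun g => g t) @ (Phi @ nbhs u) --> Phi u t.
  move=> t.
  have H : (fun v : {ptws A -> CC R} => v (a t)) @ nbhs u --> u (a t).
    by have /ptwsP := @cvg_id _ (nbhs u); apply.
  have H2 := @cvgMr_tmp _ _ _ _ _ _ (c t) H.
  exact: H2.
move/(@ptwsP U (CC R) (Phi @ nbhs u) (Phi u) _).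
exact.
Qed.

Section NFS2.
Context {R : realType}.
Local Notation C := (CC R).
Context {X : Type}.
Context {F : set (X -> C)} {N : (X -> C) -> R}.
Hypothesis hNF : normed_function_space F N.
Hypothesis hreg : regular_fs F N.

Lemma ballr_closed (r : R) : 0 < r ->
  closed ([set u | F u /\ N u <= r] : set {ptws X -> C}).
Proof.
move=> r0.
pose a : C := ((r^-1)%:C)%C.
have ca : cmod a = r^-1 by rewrite cmodR // invr_ge0 ltW.
have -> : [set u | F u /\ N u <= r] =
    (fun u : {ptws X -> C} => ((fun x => u (id x) * a) : {ptws X -> C})) @^-1`
      [set f | F f /\ N f <= 1].
  apply/seteqP; split => u /=.
    move=> [Fu Nu]; have E : (fun x => u x * a) = (fun x => a * u x).
      by apply: funext => x; rewrite mulrC.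
    rewrite E; split. exact: (Fscale hNF).
    by rewrite (Nscale hNF) // ca ler_pdivrMl // mulr1.
  move=> [Fu Nu]; have E : (fun x => u x * a) = (fun x => a * u x).
    by apply: funext => x; rewrite mulrC.
  rewrite E in Fu Nu.
  have E2 : u = (fun x => ((r%:C)%C : C) * (a * u x)).
    apply: funext => x; rewrite mulrA -rmorphM /= mulfV ?gt_eqF //.
    by rewrite mul1r.
  rewrite E2; split; first exact: (Fscale hNF).
  rewrite (Nscale hNF) // (@cmodR R r (ltW r0)).
  by rewrite -[leRHS]mulr1 ler_pM2l.
apply: preimage_closed; last exact: hreg.
by move=> u _; apply: ptws_cont.
Qed.
End NFS2.

Section Poly.
Context {R : realType}.
Local Notation C := (CC R).
Context {n : nat}.
Local Notation Cn := (CCn R n).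

Lemma leC_Re (x : R) (y : C) : ((x%:C)%C : C) <= y -> x <= complex.Re y.
Proof.
case: y => a b H.
have : ((x%:C)%C : R[i]) <= (a +i* b)%C by exact: H.
rewrite -[(x%:C)%C]/((x +i* 0)%C) -[(_ +i* _)%C <= (_ +i* _)%C]/((_ == _) && (_ <= _)).
by move=> /andP[_ ->].
Qed.

Lemma entry_le (z : Cn) (i : 'I_n) : `|z ord0 i| <= `|z|.
Proof.
rewrite [leRHS]/Num.norm /= mx_normE -[leLHS]nngE num_le.
exact: (le_bigmax _ _ (ord0, i)).
Qed.

Context (Y : set Cn).

Definition Good (h : Cn -> C) :=
  continuous h /\ exists M : R, 0 <= M /\ forall z, Y z -> cmod (h z) <= M.

Lemma Good_cst (c : C) : Good (fun _ => c).
Proof.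
split; first exact: cst_continuous.
by exists (cmod c); split; [exact: cmod_ge0 | ].
Qed.

Lemma Good_add f g : Good f -> Good g -> Good (fun z => f z + g z).
Proof.
move=> [cf [Mf [Mf0 hf]]] [cg [Mg [Mg0 hg]]]; split.
  by move=> z; exact: (continuousD (cf z) (cg z)).
exists (Mf + Mg); split; first exact: addr_ge0.
move=> z Yz; apply: le_trans (cmodD _ _) _; apply: lerD; [exact: hf | exact: hg].
Qed.

Lemma Good_mul f g : Good f -> Good g -> Good (fun z => f z * g z).
Proof.
move=> [cf [Mf [Mf0 hf]]] [cg [Mg [Mg0 hg]]]; split.
  by move=> z; exact: (continuousM (cf z) (cg z)).
exists (Mf * Mg); split; first exact: mulr_ge0.
move=> z Yz; rewrite cmodM; apply: ler_pM; [exact: cmod_ge0|exact: cmod_ge0|exact: hf|exact: hg].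
Qed.

Lemma Good_pow f k : Good f -> Good (fun z => f z ^+ k).
Proof.
move=> gf; elim: k => [|k IH].
  have -> : (fun z => f z ^+ 0) = (fun _ => 1) by apply: funext => z; rewrite expr0.
  exact: Good_cst.
have -> : (fun z => f z ^+ k.+1) = (fun z => f z * f z ^+ k).
  by apply: funext => z; rewrite exprS.
exact: Good_mul.
Qed.

Lemma Good_sum (I : Type) (r : seq I) (Fi : I -> Cn -> C) :
  (forall i, Good (Fi i)) -> Good (fun z => \sum_(i <- r) Fi i z).
Proof.
move=> H; elim: r => [|a r IH].
  have -> : (fun z => \sum_(i <- [::]) Fi i z) = (fun _ => 0).
    by apply: funext => z; rewrite big_nil.
  exact: Good_cst.
have -> : (fun z => \sum_(i <- a :: r) Fi i z) = (fun z => Fi a z + \sum_(i <- r) Fi i z).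
  by apply: funext => z; rewrite big_cons.
exact: Good_add.
Qed.

Lemma Good_prod (I : Type) (r : seq I) (Fi : I -> Cn -> C) :
  (forall i, Good (Fi i)) -> Good (fun z => \prod_(i <- r) Fi i z).
Proof.
move=> H; elim: r => [|a r IH].
  have -> : (fun z => \prod_(i <- [::]) Fi i z) = (fun _ => 1).
    by apply: funext => z; rewrite big_nil.
  exact: Good_cst.
have -> : (fun z => \prod_(i <- a :: r) Fi i z) = (fun z => Fi a z * \prod_(i <- r) Fi i z).
  by apply: funext => z; rewrite big_cons.
exact: Good_mul.
Qed.

Hypothesis hb : bounded_set Y.

Lemma Good_coord (i : 'I_n) : Good (fun z => z ord0 i).
Proof.
split; first exact: coord_continuous.
case: hb => M [Mreal HM].
have HM1 : forall z, Y z -> `|z| <= M + 1.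
  by apply: HM; rewrite ltrDl ltr01.
exists (Num.max (complex.Re (M + 1)) 0); split; first by rewrite le_max lexx orbT.
move=> z Yz; apply: le_trans (_ : _ <= complex.Re (M + 1)) _; last by rewrite le_max lexx.
apply: leC_Re; rewrite cmodE.
exact: le_trans (entry_le z i) (HM1 z Yz).
Qed.

Lemma Good_poly (p : mpoly.mpoly n C) : Good (polyfun p).
Proof.
rewrite /polyfun (funext (fun z : Cn => mpoly.mevalE (fun i => z ord0 i) p)).
apply: Good_sum => m; apply: Good_mul; first exact: Good_cst.
apply: Good_prod => i; exact: (@Good_pow (fun z : Cn => z ord0 i) _ (Good_coord i)).
Qed.
End Poly.

Section Clos.
Context {R : realType}.
Local Notation C := (CC R).
Context {T : topologicalType}.

Lemma ltC0 (d : R) : ((0 : C) < (d%:C)%C) = (0 < d).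
Proof. exact: (@ltcR R 0 d). Qed.

Lemma closure_bound (Y : set T) (h : T -> C) (M : R) (z : T) : closure Y z ->
  (forall eps : R, 0 < eps -> nbhs z [set y | closure Y y -> cmod (h z - h y) < eps]) ->
  (forall y, Y y -> cmod (h y) <= M) -> cmod (h z) <= M.
Proof.
move=> clz hc hY; rewrite leNgt; apply/negP => hlt.
have d0 : 0 < cmod (h z) - M by rewrite subr_gt0.
have [y [Yy By]] := clz _ (hc _ d0).
have := By (subset_closure Yy).
have := cmodB (h z) (h y).
have := hY y Yy.
move=> h1 h2 h3.
have : cmod (h z) < M + (cmod (h z) - M).
  apply: le_lt_trans h2 _; exact: ler_ltD.
by rewrite addrC subrK ltxx.
Qed.

Lemma cont_near (Y : set T) (h : T -> C) (z : T) : {for z, continuous h} ->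
  forall eps : R, 0 < eps -> nbhs z [set y | closure Y y -> cmod (h z - h y) < eps].
Proof.
move=> ch eps eps0.
move/cvgrPdist_lt : ch => /(_ (eps%:C)%C); rewrite ltC0 => /(_ eps0).
by apply: filterS => y /= H _; rewrite -normC_lt.
Qed.

Lemma within_near (Y : set T) (h : T -> C) (z : T) : {within closure Y, continuous h} ->
  closure Y z ->
  forall eps : R, 0 < eps -> nbhs z [set y | closure Y y -> cmod (h z - h y) < eps].
Proof.
move=> /subspace_continuousP ch clz eps eps0.
move/cvgrPdist_lt : (ch z clz) => /(_ (eps%:C)%C); rewrite ltC0 => /(_ eps0).
by apply: filterS => y; rewrite -normC_lt.
Qed.
End Clos.

Section Sups.
Context {R : realType}.
Local Notation C := (CC R).
Context {T : Type}.

Lemma supnorm_le {D : set T} {h : T -> C} {b : R} : D !=set0 ->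
  (forall z, D z -> cmod (h z) <= b) -> supnorm D h <= b.
Proof.
move=> [z0 Dz0] hb; apply: ge_sup; first by exists (cmod (h z0)), z0.
by move=> _ [z Dz <-]; exact: hb.
Qed.

Lemma le_supnorm {D : set T} {h : T -> C} {b : R} :
  (forall z, D z -> cmod (h z) <= b) -> forall z, D z -> cmod (h z) <= supnorm D h.
Proof.
move=> hb z Dz.
have hs : has_sup [set cmod (h z) | z in D].
  by split; [exists (cmod (h z)), z | exists b => _ [y Dy <-]; exact: hb].
by move/ubP: (sup_upper_bound hs); apply; exists z.
Qed.

Lemma supnorm_ge0 {D : set T} {h : T -> C} {b : R} : D !=set0 ->
  (forall z, D z -> cmod (h z) <= b) -> 0 <= supnorm D h.
Proof.
move=> [z0 Dz0] hb; apply: le_trans (cmod_ge0 (h z0)) _.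
exact: (le_supnorm hb z0 Dz0).
Qed.
End Sups.

Section Finish.
Context {R : realType}.
Local Notation C := (CC R).
Context {X : Type}.
Context {F : set (X -> C)} {N : (X -> C) -> R}.
Hypothesis hNF : normed_function_space F N.

Lemma eps_finish (Tm : X -> C) (K1 s : R) : 0 < K1 -> 0 <= s ->
  (forall f, F f -> 0 < N f -> forall eps, 0 < eps ->
     F (fun x => Tm x * f x) /\ N (fun x => Tm x * f x) <= K1 * (s + eps) * N f) ->
  is_mult F N Tm /\ mult_norm F N Tm <= K1 * s.
Proof.
move=> K10 s0 H; apply: (mult_finish hNF); first exact: mulr_ge0 (ltW K10) s0.
move=> f Ff.
have [Nf0|Nfpos] := eqVneq (N f) 0.
  rewrite Nf0 mulr0; have -> := @Neq0 _ _ _ _ hNF f Ff Nf0.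
  have -> : (fun x : X => Tm x * 0) = (fun _ => 0) by apply: funext => x; rewrite mulr0.
  by split; [exact: (F0 hNF) | rewrite (N0 hNF)].
have Nfgt0 : 0 < N f by rewrite lt0r Nfpos (Nge0 hNF).
split; first by have [] := H f Ff Nfgt0 1 ltr01.
apply/ler_addgt0Pr => e e0.
have ee0 : 0 < e / (K1 * N f) by rewrite divr_gt0 // mulr_gt0.
have [_ ] := H f Ff Nfgt0 _ ee0; move/le_trans; apply.
rewrite mulrDr mulrDl; apply: lerD => //.
by rewrite mulrAC mulrC mulfVK // mulf_neq0 // gt_eqF.
Qed.
End Finish.

Theorem proposition5p7 (R : realType) (X : Type)
  (F : set (X -> CC R)) (N : (X -> CC R) -> R)
  (n : nat) (w : 'I_n -> X -> CC R) (Y : set (CCn R n)) :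
  normed_function_space F N -> regular_fs F N -> one_independent F ->
  (forall i, is_mult F N (w i)) ->
  bounded_domain Y ->
  (forall g, Aalg Y g -> forall e : R, 0 < e ->
     exists p : mpoly.mpoly n (CC R),
       supnorm (closure Y) (fun z => g z - polyfun p z) < e) ->
  closure [set restr Y (polyfun p) |
             p in [set p : mpoly.mpoly n (CC R) | supnorm Y (polyfun p) < 1]]
    = [set restr Y g | g in [set g | Hinf Y g /\ supnorm Y g <= 1]] ->
  (forall x, closure Y (vecfun w x)) ->
  bounded_into_Mult F N [set: mpoly.mpoly n (CC R)]
    (fun p => supnorm (closure Y) (polyfun p)) (fun p => polyfun p \o vecfun w) ->
  bounded_into_Mult F N (Aalg Y) (supnorm (closure Y)) (fun g => g \o vecfun w)
  /\ ((forall x, Y (vecfun w x)) ->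
      bounded_into_Mult F N (Hinf Y) (supnorm Y) (fun g => g \o vecfun w)).
Proof.
move=> hNF hreg _ _ hY hdense hclos hwcl [hpm [K hK]].
have Ynz : Y !=set0 by case: hY.
have hb : bounded_set Y by case: hY.
have clYnz : closure Y !=set0.
  by case: Ynz => z Yz; exists z; exact: subset_closure.
pose K1 := Num.max K 0 + 1.
have K10 : 0 < K1 by rewrite /K1 ltr_pwDr // le_max lexx orbT.
have Pbound : forall p (b : R), (forall z, closure Y z -> cmod (polyfun p z) <= b) ->
   forall f, F f -> F (fun x => polyfun p (vecfun w x) * f x) /\
     N (fun x => polyfun p (vecfun w x) * f x) <= K1 * b * N f.
  move=> p b hpb f Ff.
  have hm := hpm p I.
  split; first by case: hm => + _; apply.
  have b0 : 0 <= b.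
    by case: clYnz => z clz; apply: le_trans (cmod_ge0 _) (hpb z clz).
  have s0 : 0 <= supnorm (closure Y) (polyfun p) := supnorm_ge0 clYnz hpb.
  have sb : supnorm (closure Y) (polyfun p) <= b := supnorm_le clYnz hpb.
  apply: le_trans (mult_bound hNF _ hm f Ff) _.
  apply: ler_wpM2r; first exact: (Nge0 hNF).
  apply: le_trans (hK p I) _.
  apply: le_trans (_ : _ <= Num.max K 0 * supnorm (closure Y) (polyfun p)) _.
    by apply: ler_wpM2r => //; rewrite le_max lexx.
  apply: ler_pM => //; first by rewrite le_max lexx orbT.
  by rewrite /K1 lerDl.
have partI : forall g, Aalg Y g -> is_mult F N (g \o vecfun w) /\
    mult_norm F N (g \o vecfun w) <= K1 * supnorm (closure Y) g.
  move=> g [[hol [M hM]] hcont].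
  have gcl : forall z, closure Y z -> cmod (g z) <= M.
    by move=> z clz; exact: (closure_bound _ _ _ _ clz (within_near _ _ _ hcont clz) hM).
  set s := supnorm (closure Y) g.
  have s0 : 0 <= s := supnorm_ge0 clYnz gcl.
  have gs : forall z, closure Y z -> cmod (g z) <= s := le_supnorm gcl.
  have /choice [ps hps] : forall k : nat, exists p : mpoly.mpoly n (CC R),
      supnorm (closure Y) (fun z => g z - polyfun p z) < k.+1%:R^-1.
    by move=> k; apply: hdense; [split => //; split => //; exists M | rewrite invr_gt0].
  have pbnd : forall k z, closure Y z ->
      (cmod (polyfun (ps k) z) <= s + k.+1%:R^-1) /\
      (cmod (g z - polyfun (ps k) z) <= k.+1%:R^-1).
    move=> k z clz.
    have [cp [Mp [Mp0 hMp]]] := Good_poly Y hb (ps k).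
    have pcl : forall z, closure Y z -> cmod (polyfun (ps k) z) <= Mp.
      by move=> y cly; exact: (closure_bound _ _ _ _ cly (cont_near _ _ _ (cp y)) hMp).
    have dcl : forall z, closure Y z -> cmod (g z - polyfun (ps k) z) <= M + Mp.
      move=> y cly; apply: le_trans (cmodD _ _) _; rewrite cmodN.
      by apply: lerD; [exact: gcl | exact: pcl].
    have d2 : cmod (g z - polyfun (ps k) z) <= k.+1%:R^-1.
      exact: le_trans (le_supnorm dcl z clz) (ltW (hps k)).
    split => //.
    apply: le_trans (cmodB _ (g z)) _.
    rewrite -[cmod (polyfun _ z - g z)]cmodN opprB; apply: lerD => //; exact: gs.
  apply: (@eps_finish _ _ _ _ hNF (g \o vecfun w) _ _ K10 s0) => f Ff Nf0 eps eps0.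
  have r0 : 0 < K1 * (s + eps) * N f.
    by rewrite mulr_gt0 // mulr_gt0 // ltr_pwDr.
  pose u := fun k => ((fun x => polyfun (ps k) (vecfun w x) * f x) : {ptws X -> CC R}).
  suff : [set v : {ptws X -> CC R} | F v /\ N v <= K1 * (s + eps) * N f]
           (fun x => g (vecfun w x) * f x) by [].
  apply: (@closed_cvg nat {ptws X -> CC R} \oo _ u _ (ballr_closed hNF hreg _ r0)).
    have := near_infty_natSinv_lt (PosNum eps0); apply: filterS => k /= hk.
    have [Fu Nu] := Pbound (ps k) _ (fun z clz => (pbnd k z clz).1) f Ff.
    split => //; apply: le_trans Nu _.
    apply: ler_wpM2r; first exact: (Nge0 hNF).
    apply: ler_wpM2l; first exact: ltW.
    by rewrite lerD2l ltW.
  apply/ptwsP => t.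
  have H : (fun k => polyfun (ps k) (vecfun w t)) @ \oo --> g (vecfun w t).
    apply/cvgrPdist_lt => e' e'0; have [r' r'0 ->] := posC _ e'0.
    have := near_infty_natSinv_lt (PosNum r'0); apply: filterS => k /= hk.
    by rewrite normC_lt; apply: le_lt_trans ((pbnd k _ (hwcl t)).2) hk.
  exact: (@cvgMr_tmp _ _ _ _ _ _ (f t) H).
split.
  split; first by move=> g /partI[].
  by exists K1 => g /partI[].
move=> hwY.
have partII : forall g, Hinf Y g -> is_mult F N (g \o vecfun w) /\
    mult_norm F N (g \o vecfun w) <= K1 * supnorm Y g.
  move=> g [hol [M hM]].
  set s := supnorm Y g.
  have s0 : 0 <= s := supnorm_ge0 Ynz hM.
  have gs := le_supnorm hM.
  apply: (@eps_finish _ _ _ _ hNF (g \o vecfun w) _ _ K10 s0) => f Ff Nf0 eps eps0.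
  have t0 : 0 < s + eps by rewrite ltr_pwDr.
  pose a : CC R := (((s + eps)^-1)%:C)%C.
  have ca : cmod a = (s + eps)^-1 by rewrite cmodR // invr_ge0 ltW.
  pose h := fun z => a * g z.
  have Hh : Hinf Y h /\ supnorm Y h <= 1.
    split; first split.
    - move=> z Yz; have := differentiableZ a (hol z Yz); exact.
    - exists ((s + eps)^-1 * M) => z Yz; rewrite /h cmodM ca.
      by apply: ler_wpM2l; [rewrite invr_ge0 ltW | exact: hM].
    - apply: supnorm_le => // z Yz; rewrite /h cmodM ca.
      rewrite ler_pdivrMl // mulr1; apply: le_trans (gs z Yz) _.
      by rewrite lerDl ltW.
  have hcl : closure [set restr Y (polyfun p) |
             p in [set p : mpoly.mpoly n (CC R) | supnorm Y (polyfun p) < 1]] (restr Y h).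
    by rewrite hclos; exists h.
  pose a' : X -> Y := fun x => exist _ (vecfun w x) (mem_set (hwY x)).
  pose Phi := fun u : {ptws Y -> CC R} => ((fun x => u (a' x) * f x) : {ptws X -> CC R}).
  have r0 : 0 < K1 * N f by rewrite mulr_gt0.
  have Bcl := ballr_closed hNF hreg _ r0.
  have Pcl : closed (Phi @^-1` [set v | F v /\ N v <= K1 * N f]).
    by apply: preimage_closed Bcl => u _; exact: ptws_cont.
  have sub : [set restr Y (polyfun p) |
             p in [set p : mpoly.mpoly n (CC R) | supnorm Y (polyfun p) < 1]]
      `<=` Phi @^-1` [set v | F v /\ N v <= K1 * N f].
    move=> _ [p /= hp <-].
    have [cp [Mp [Mp0 hMp]]] := Good_poly Y hb p.
    have pY : forall z, Y z -> cmod (polyfun p z) <= 1.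
      by move=> z Yz; apply: le_trans (le_supnorm hMp z Yz) (ltW hp).
    have pcl : forall z, closure Y z -> cmod (polyfun p z) <= 1.
      by move=> z clz; exact: (closure_bound _ _ _ _ clz (cont_near _ _ _ (cp z)) pY).
    have [Fu Nu] := Pbound p 1 pcl f Ff.
    by split; [exact: Fu | rewrite mulr1 in Nu].
  have [Fv Nv] : (Phi @^-1` [set v | F v /\ N v <= K1 * N f]) (restr Y h).
    by rewrite ((closure_id _).1 Pcl); exact: (closureS sub).
  have E : (fun x => (g \o vecfun w) x * f x) =
           (fun x => ((s + eps)%:C)%C * Phi (restr Y h) x).
    apply: funext => x; rewrite /Phi /restr /h /= !mulrA -rmorphM /= mulfV ?gt_eqF //.
    by rewrite mul1r.
  rewrite E; split; first exact: (Fscale hNF).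
  rewrite (Nscale hNF) // (@cmodR R (s + eps) (ltW t0)).
  by rewrite [K1 * _]mulrC -mulrA ler_pM2l.
split; first by move=> g /partII[].
by exists K1 => g /partII[].
Qed.
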